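(* The Euclidean plane $\mathbb R^2$ is strongly discrete homogeneous.
   Context: A subset $D$ of $X$ is discrete if each point of $X$ has a neighbourhood containing at most one point of $D$. A Hausdorff space $X$ is strongly discrete homogeneous (sDH) if for any two discrete subsets $A,B$ of $X$ and any bijection $f\colon A\to B$, $f$ extends to a homeomorphism of $X$ onto itself. *)

(* Defs.v *)
From HB Require Import structures.
From mathcomp Require Import all_boot all_order all_algebra.
From mathcomp Require Import all_classical all_reals all_analysis.
Set Implicit Arguments. Unset Strict Implicit. Unset Printing Implicit Defensive.
Local Open Scope classical_set_scope.

Definition discrete_subset {X : topologicalType} (D : set X) : Prop :=
  forall x : X, exists U : set X, nbhs x U /\
    (forall a b : X, D a -> D b -> U a -> U b -> a = b).

Definition self_homeomorphism {X : topologicalType} (h : X -> X) : Prop :=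
  exists g : X -> X, [/\ cancel h g, cancel g h, continuous h & continuous g].

Definition sDH (X : topologicalType) : Prop :=
  hausdorff_space X /\
  forall (A B : set X) (f : X -> X),
    discrete_subset A -> discrete_subset B -> set_bij A B f ->
    exists h : X -> X, self_homeomorphism h /\ (forall a, A a -> h a = f a).

(* Main.v *)
Require Import Defs.
From mathcomp Require Import all_boot all_order all_algebra.
From mathcomp Require Import all_classical all_reals all_analysis.
Import numFieldNormedType.Exports.
From mathcomp Require Import ring lra.
Import Order.TTheory GRing.Theory Num.Theory.
Local Open Scope classical_set_scope.
Local Open Scope ring_scope.

Lemma discrete_closed {T : topologicalType} (D : set T) :
  hausdorff_space T -> discrete_subset D -> closed D.
Proof.
move=> hT dD x clx.
have [U [Ux HU]] := dD x.
have [d [Dd Ud]] := clx U Ux.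
have [dx|dx] := pselect (d = x); first by rewrite -dx.
have cd : closed [set d] by apply: accessible_closed_set1; exact: hausdorff_accessible.
have nx : nbhs x (~` [set d]).
  apply: open_nbhs_nbhs; split; first by rewrite openC.
  by move=> /= xd; apply: dx; rewrite xd.
have [e [De [Ue ne]]] := clx _ (filterI Ux nx).
move: ne => /=; rewrite -(HU d e Dd De Ud Ue); by [].
Qed.

Lemma discrete_within_continuous {T U : topologicalType} (D : set T) (f : T -> U) :
  discrete_subset D -> {within D, continuous f}.
Proof.
move=> dD; apply/subspace_continuousP => x Dx W /= Wf.
have [V [Vx HV]] := dD x.
rewrite nbhs_simpl /=.
apply: filterS (Vx) => y Vy Dy.
have xy := HV x y Dx Dy (nbhs_singleton Vx) Vy.
by rewrite -xy; exact: nbhs_singleton Wf.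
Qed.

Section Ext.
Variable R : realType.

Lemma ext_discrete (D : set R) (v : R -> R) : discrete_subset D ->
  exists g : R -> R, continuous g /\ (forall x, D x -> g x = v x).
Proof.
move=> dD.
have nR : normal_space R := pseudometric_normal.
have cD : closed D := @discrete_closed R D (@Rhausdorff R) dD.
pose u : R -> R := fun x => v x / (1 + `|v x|).
have pos x : 0 < 1 + `|v x| by rewrite ltr_pwDl.
have hu x : `|u x| = `|v x| / (1 + `|v x|).
  by rewrite /u normrM normfV (gtr0_norm (pos x)).
have ulT x : `|u x| < 1.
  by rewrite hu ltr_pdivrMr // mul1r ltrDr.
have [g [gu cg gb]] := @continuous_bounded_extension R R nR D cD u 1 ltr01
   (@discrete_within_continuous R R D u dD) (fun x _ => ltW (ulT x)).
pose B := [set x | `|g x| = 1].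
have cB : closed B.
  have -> : B = (fun x => `|g x|) @^-1` [set 1] by [].
  apply: preimage_closed.
    move=> x _; apply: continuous_comp; first exact: cg.
    exact: norm_continuous.
  by apply: accessible_closed_set1; exact: hausdorff_accessible (@Rhausdorff R).
have BD : B `&` D = set0.
  apply/seteqP; split => // x [/= Bx Dx].
  by move: (ulT x); rewrite (gu x) ?inE // Bx ltxx.
have [f [cf fB fD fr]] := @urysohn_ext_itv R R nR B D 0 1 cB cD BD ltr01.
pose g' x := g x * f x.
have g'lt x : `|g' x| < 1.
  have : range f (f x) by exists x.
  move/fr; rewrite /= in_itv /= => /andP [fx0 fx1].
  have [Bx|nBx] := pselect (B x).
    have fx : f x = 0 by apply: fB; exists x.
    by rewrite /g' fx mulr0 normr0.
  have gx1 : `|g x| < 1 by rewrite lt_neqAle gb andbT; apply/eqP.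
  rewrite /g' normrM (ger0_norm fx0).
  apply: (le_lt_trans _ gx1).
  by rewrite ler_piMr.
exists (fun x => g' x / (1 - `|g' x|)); split.
  move=> x; apply: cvgM.
    by apply: cvgM; [exact: cg | exact: cf].
  apply: cvgV; first by rewrite subr_eq0 eq_sym; apply/negP => /eqP h; move: (g'lt x); rewrite h ltxx.
  apply: cvgB; first exact: cvg_cst.
  apply: cvg_norm.
  by apply: cvgM; [exact: cg | exact: cf].
move=> x Dx.
have fx1 : f x = 1 by apply: fD; exists x.
have gxu : g' x = u x by rewrite /g' fx1 mulr1 -(gu x) // inE.
rewrite gxu hu /u.
have p := pos x; have p0 : 1 + `|v x| != 0 by rewrite gt_eqF.
field; rewrite ?p0 //=.
by rewrite addrK oner_neq0.
Qed.
End Ext.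

Section S3.
Variable R : realType.
Local Notation P := (R * R)%type.

Lemma ext_via {T : pointedType} (A : set T) (rho : T -> R) (w : T -> R) :
  (forall a b, A a -> A b -> rho a = rho b -> a = b) ->
  discrete_subset (rho @` A) ->
  exists g : R -> R, continuous g /\ forall a, A a -> g (rho a) = w a.
Proof.
move=> inj dA.
pose v t := w (get [set a | A a /\ rho a = t]).
have [g [cg hg]] := @ext_discrete R _ v dA.
exists g; split => // a Aa.
rewrite hg; last by exists a.
rewrite /v; congr (w _).
have : [set b | A b /\ rho b = rho a] (get [set b | A b /\ rho b = rho a]).
  by apply: getPex; exists a.
by move=> [Ab rb]; apply: inj.
Qed.

Lemma compact_discrete_finite {T : topologicalType} (K A : set T) :
  compact K -> discrete_subset A -> finite_set (A `&` K).
Proof.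
move=> cK dA; apply: contrapT => infC.
pose C := A `&` K.
pose F := [set S : set T | finite_set (C `\` S)].
have FF : ProperFilter F.
  constructor.
    by rewrite /F /= setD0.
  constructor.
  - by rewrite /F /= setDT; exact: finite_set0.
  - by move=> S1 S2; rewrite /F /= setDIr => h1 h2; rewrite finite_setU; split.
  - by move=> S1 S2 S12; rewrite /F /=; apply: sub_finite_set; exact: setDS.
have FK : F K.
  rewrite /F /=; apply: (@sub_finite_set _ _ set0); last exact: finite_set0.
  by move=> y [[_ Ky] nKy].
have [x [Kx clx]] := cK F FF FK.
have [U [Ux HU]] := dA x.
have FS : F (C `\` U).
  rewrite /F /=.
  have [[y [Cy Uy]]|none] := pselect (exists y, C y /\ U y).
    apply: (@sub_finite_set _ _ [set y]); last exact: finite_set1.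
    move=> z [Cz nz]; have Uz : U z by apply: contrapT => nUz; apply: nz.
    by rewrite /= (HU z y Cz.1 Cy.1 Uz Uy).
  apply: (@sub_finite_set _ _ set0); last exact: finite_set0.
  move=> z [Cz nz]; apply: none; exists z; split => //.
  by apply: contrapT => nUz; apply: nz.
have [z [[_ nUz] Uz]] := clx _ _ FS Ux.
by apply: nUz.
Qed.
End S3.

Set Implicit Arguments. Unset Strict Implicit.

Section S4.
Variable R : realType.
Local Notation P := (R * R)%type.

Definition box (M : R) : set P := [set p | `|p.1| <= M /\ `|p.2| <= M].

Lemma box_compact M : compact (box M).
Proof.
have -> : box M = `[-M, M] `*` `[-M, M].
  apply/seteqP; split => p /=.
    by rewrite !in_itv /= -!ler_norml.
  by rewrite !in_itv /= -!ler_norml.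
by apply: compact_setX; exact: segment_compact.
Qed.

Lemma discrete_countable (A : set P) : discrete_subset A -> countable A.
Proof.
move=> dA.
have -> : A = \bigcup_(n in [set: nat]) (A `&` box n%:R).
  apply/seteqP; split => [p Ap|p [n _ [Ap _]]] //.
  have h0 : 0 <= `|p.1| + `|p.2| by rewrite addr_ge0.
  exists (Num.Def.archi_bound (`|p.1| + `|p.2|)) => //; split => //.
  have hb := archi_boundP h0; split.
    by apply: le_trans (ltW hb); rewrite lerDl.
  by apply: le_trans (ltW hb); rewrite lerDr.
apply: bigcup_countable; first exact: countableP.
move=> n _; apply: finite_set_countable.

exact: compact_discrete_finite (@box_compact n%:R) dA.
Qed.

Lemma notin_countable (S : set R) : countable S -> exists s, ~ S s.
Proof.
move=> cS; apply: contrapT => h.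
have Sall : forall s, S s.
  by move=> s; apply: contrapT => ns; apply: h; exists s.
have c01 : countable `[(0:R), 1] := sub_countable (subset_card_le (fun x _ => Sall x)) cS.
have := countable_lebesgue_measure0 c01.
rewrite lebesgue_measure_itv /= lte_fin ltr01 /=.
rewrite -EFinB subr0 => /eqP; rewrite eqe oner_eq0 //.
Qed.

Definition Nc (c p : P) : R := (p.1 - c.1) ^+ 2 + (p.2 - c.2) ^+ 2.

Lemma generic_center (A : set P) : countable A ->
  exists c : P, forall a b, A a -> A b -> Nc c a = Nc c b -> a = b.
Proof.
move=> cA.
have cAA : countable (A `*` A) := countableX cA cA.
pose lam (ab : P * P) := (ab.1.2 + ab.2.2) / 2.
have [l nl] := notin_countable (sub_countable (card_image_le lam _) cAA).
pose g (ab : P * P) := ((ab.1.1 ^+ 2 + ab.1.2 ^+ 2 - ab.2.1 ^+ 2 - ab.2.2 ^+ 2)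
   - 2 * (ab.1.2 - ab.2.2) * l) / (2 * (ab.1.1 - ab.2.1)).
have [s ns] := notin_countable (sub_countable (card_image_le g _) cAA).
exists (s, l) => a b Aa Ab; rewrite /Nc /= => eq.
apply: contrapT => ab.
case: (eqVneq a.1 b.1) => e1.
  have e2 : a.2 != b.2.
    apply/eqP => e2; apply: ab; move: e1 e2; case: a {Aa eq} => ? ?; case: b {Ab} => ? ? /= -> -> //.
  apply: nl; exists (a, b) => //; rewrite /lam /=.
  have h : (a.2 - b.2) * (a.2 + b.2 - 2 * l) = 0.
    have -> : (a.2 - b.2) * (a.2 + b.2 - 2 * l) = ((a.1 - s) ^+ 2 + (a.2 - l) ^+ 2) - ((b.1 - s) ^+ 2 + (b.2 - l) ^+ 2).
      by rewrite e1; ring.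
    by rewrite eq subrr.
  move/eqP: h; rewrite mulf_eq0 subr_eq0 (negbTE e2) /= subr_eq0 => /eqP ->.
  by field.
have Hs : [set g x | x in A `*` A] s; last exact: (ns Hs).
exists (a, b) => //; rewrite /g /=.
have h : 2 * (a.1 - b.1) * s = (a.1 ^+ 2 + a.2 ^+ 2 - b.1 ^+ 2 - b.2 ^+ 2) - 2 * (a.2 - b.2) * l.
  apply/eqP; rewrite -subr_eq0; apply/eqP.
  have -> : 2 * (a.1 - b.1) * s - ((a.1 ^+ 2 + a.2 ^+ 2 - b.1 ^+ 2 - b.2 ^+ 2) - 2 * (a.2 - b.2) * l)
     = - (((a.1 - s) ^+ 2 + (a.2 - l) ^+ 2) - ((b.1 - s) ^+ 2 + (b.2 - l) ^+ 2)) by ring.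
  by rewrite eq subrr oppr0.
rewrite -h; field.
rewrite subr_eq0; apply: contra_neq e1 => hh; exact: hh.
Qed.
End S4.
Arguments Nc {R}. Arguments box {R}.

Set Implicit Arguments. Unset Strict Implicit.

Section S5.
Variable R : realType.
Local Notation P := (R * R)%type.


Definition rho (c p : P) : R := Num.sqrt (Nc c p).

Lemma Nc_ge0 (c p : P) : 0 <= Nc c p.
Proof. by rewrite /Nc addr_ge0 // sqr_ge0. Qed.

Lemma rho_coord1 (c p : P) : `|p.1 - c.1| <= rho c p.
Proof.
rewrite /rho -sqrtr_sqr; apply: ler_wsqrtr; rewrite /Nc lerDl sqr_ge0 //.
Qed.

Lemma rho_coord2 (c p : P) : `|p.2 - c.2| <= rho c p.
Proof.
rewrite /rho -sqrtr_sqr; apply: ler_wsqrtr; rewrite /Nc lerDr sqr_ge0 //.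
Qed.

Lemma rho_inj (c p q : P) : rho c p = rho c q -> Nc c p = Nc c q.
Proof.
move=> h; rewrite -(sqr_sqrtr (Nc_ge0 c p)) -(sqr_sqrtr (Nc_ge0 c q)).
by rewrite -/(rho c p) h.
Qed.

Lemma rho_discrete (c : P) (A : set P) : discrete_subset A -> discrete_subset (rho c @` A).
Proof.
move=> dA t.
pose M := `|c.1| + `|c.2| + `|t| + 1.
have fin : finite_set (A `&` box M) := @compact_discrete_finite _ _ _ (@box_compact R M) dA.
pose F := (rho c @` (A `&` box M)) `\` [set t].
have cF : closed F.
  apply: (proj1 (@accessible_finite_set_closed _) (hausdorff_accessible (@Rhausdorff R))).
  exact: finite_setD (finite_image _ fin).
exists (`](t - 1), (t + 1)[ `&` ~` F); split.
  apply: open_nbhs_nbhs; split.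
    by apply: openI; [exact: itv_open | rewrite openC].
  split; first by rewrite /= in_itv /=; apply/andP; split; lra.
  by move=> [_ /= ].
suff key : forall x, (rho c @` A) x -> (`](t - 1), (t + 1)[ `&` ~` F) x -> x = t.
  by move=> x y Ax Ay Ux Uy; rewrite (key x Ax Ux) (key y Ay Uy).
move=> _ [a Aa <-] [/= ia nF].
apply: contrapT => nt; apply: nF; split => //.
exists a => //; split => //.
move: ia; rewrite in_itv /= => /andP [_ ht].
have hr : rho c a <= `|t| + 1.
  by apply: ltW; apply: lt_le_trans ht _; rewrite lerD2r ler_norm.
have h1 := rho_coord1 c a; have h2 := rho_coord2 c a.
have n1 : `|a.1| <= `|c.1| + `|a.1 - c.1|.
  by rewrite -{1}(subrK c.1 a.1) (le_trans (ler_normD _ _)) // addrC.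
have n2 : `|a.2| <= `|c.2| + `|a.2 - c.2|.
  by rewrite -{1}(subrK c.2 a.2) (le_trans (ler_normD _ _)) // addrC.
have c1 := normr_ge0 c.1; have c2 := normr_ge0 c.2.
rewrite /M; split => /=; lra.
Qed.
End S5.
Arguments rho {R}.

Set Implicit Arguments. Unset Strict Implicit.

Section S6.
Variable R : realType.
Local Notation P := (R * R)%type.

Lemma cont_pair (f g : P -> R) : continuous f -> continuous g ->
  continuous (fun p => (f p, g p)).
Proof. move=> cf cg x. have := cvg_pair (cf x) (cg x). exact. Qed.

Lemma cont_fst : continuous (fun p : P => p.1).
Proof. by case=> a b; exact: cvg_fst. Qed.

Lemma cont_snd : continuous (fun p : P => p.2).
Proof. by case=> a b; exact: cvg_snd. Qed.

Lemma cont_comp1 (phi : R -> R) (f : P -> R) : continuous phi -> continuous f ->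
  continuous (fun p => phi (f p)).
Proof. move=> cphi cf x; exact: (continuous_comp (cf x) (cphi (f x))). Qed.

Lemma cont_add (f g : P -> R) : continuous f -> continuous g ->
  continuous (fun p => f p + g p).
Proof. by move=> cf cg x; apply: cvgD; [exact: cf | exact: cg]. Qed.

Lemma cont_sub (f g : P -> R) : continuous f -> continuous g ->
  continuous (fun p => f p - g p).
Proof. by move=> cf cg x; apply: cvgB; [exact: cf | exact: cg]. Qed.

Lemma cont_mul (f g : P -> R) : continuous f -> continuous g ->
  continuous (fun p => f p * g p).
Proof. by move=> cf cg x; apply: cvgM; [exact: cf | exact: cg]. Qed.

Lemma cont_cst (a : R) : continuous (fun _ : P => a).
Proof. by move=> x; exact: cvg_cst. Qed.

Lemma homeo_comp (h1 h2 : P -> P) : self_homeomorphism h1 -> self_homeomorphism h2 ->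
  self_homeomorphism (h2 \o h1).
Proof.
move=> [g1 [c1 c1' ch1 cg1]] [g2 [c2 c2' ch2 cg2]].
exists (g1 \o g2); split.
- by move=> x /=; rewrite c2 c1.
- by move=> x /=; rewrite c1' c2'.
- by move=> x; apply: continuous_comp; [exact: ch1 | exact: ch2].
- by move=> x; apply: continuous_comp; [exact: cg2 | exact: cg1].
Qed.

Lemma homeo_sym (h g : P -> P) : cancel h g -> cancel g h -> continuous h -> continuous g ->
  self_homeomorphism g.
Proof. by move=> c1 c2 ch cg; exists h; split. Qed.

Definition shearV (phi : R -> R) (p : P) : P := (p.1, p.2 + phi p.1).
Definition shearH (psi : R -> R) (p : P) : P := (p.1 + psi p.2, p.2).
Definition transl (c : P) (p : P) : P := (p.1 - c.1, p.2 - c.2).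

Lemma shearV_homeo phi : continuous phi -> self_homeomorphism (shearV phi).
Proof.
move=> cphi; exists (fun p => (p.1, p.2 - phi p.1)); split.
- by case=> a b; rewrite /shearV /= addrK.
- by case=> a b; rewrite /shearV /= subrK.
- apply: cont_pair; first exact: cont_fst.
  by apply: cont_add; [exact: cont_snd | apply: cont_comp1 => //; exact: cont_fst].
- apply: cont_pair; first exact: cont_fst.
  by apply: cont_sub; [exact: cont_snd | apply: cont_comp1 => //; exact: cont_fst].
Qed.

Lemma shearH_homeo psi : continuous psi -> self_homeomorphism (shearH psi).
Proof.
move=> cpsi; exists (fun p => (p.1 - psi p.2, p.2)); split.
- by case=> a b; rewrite /shearH /= addrK.
- by case=> a b; rewrite /shearH /= subrK.
- apply: cont_pair; last exact: cont_snd.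
  by apply: cont_add; [exact: cont_fst | apply: cont_comp1 => //; exact: cont_snd].
- apply: cont_pair; last exact: cont_snd.
  by apply: cont_sub; [exact: cont_fst | apply: cont_comp1 => //; exact: cont_snd].
Qed.

Lemma transl_homeo c : self_homeomorphism (transl c).
Proof.
exists (fun p => (p.1 + c.1, p.2 + c.2)); split.
- by case=> a b; rewrite /transl /= !subrK.
- by case=> a b; rewrite /transl /= !addrK.
- by apply: cont_pair; apply: cont_sub; (exact: cont_fst || exact: cont_snd || exact: cont_cst).
- by apply: cont_pair; apply: cont_add; (exact: cont_fst || exact: cont_snd || exact: cont_cst).
Qed.

Definition nrm (p : P) : R := Num.sqrt (p.1 ^+ 2 + p.2 ^+ 2).

Definition rot (th : R -> R) (p : P) : P :=
  let t := th (nrm p) in (cos t * p.1 + sin t * p.2, cos t * p.2 - sin t * p.1).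
Definition rotI (th : R -> R) (p : P) : P :=
  let t := th (nrm p) in (cos t * p.1 - sin t * p.2, cos t * p.2 + sin t * p.1).

Lemma cont_nrm : continuous nrm.
Proof.
apply: cont_comp1; first exact: sqrt_continuous.
by apply: cont_add; apply: cont_mul; (exact: cont_fst || exact: cont_snd).
Qed.

Lemma nrm_rot th p : nrm (rot th p) = nrm p.
Proof.
rewrite /nrm /rot /=; congr Num.sqrt.
set t := th _.
have h := cos2Dsin2 t.
transitivity ((cos t ^+ 2 + sin t ^+ 2) * (p.1 ^+ 2 + p.2 ^+ 2)); first ring.
by rewrite h mul1r.
Qed.

Lemma nrm_rotI th p : nrm (rotI th p) = nrm p.
Proof.
rewrite /nrm /rotI /=; congr Num.sqrt.
set t := th _.
have h := cos2Dsin2 t.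
transitivity ((cos t ^+ 2 + sin t ^+ 2) * (p.1 ^+ 2 + p.2 ^+ 2)); first ring.
by rewrite h mul1r.
Qed.

Lemma rot_homeo th : continuous th -> self_homeomorphism (rot th).
Proof.
move=> cth.
have ct : continuous (fun p => th (nrm p)) by apply: cont_comp1 => //; exact: cont_nrm.
have cc : continuous (fun p => cos (th (nrm p))) by apply: cont_comp1 => //; exact: continuous_cos.
have cs : continuous (fun p => sin (th (nrm p))) by apply: cont_comp1 => //; exact: continuous_sin.
exists (rotI th); split.
- move=> p; rewrite /rotI nrm_rot /rot /=.
  set t := th _; have h := cos2Dsin2 t.
  case: p t h => a b /= t h.
  congr pair.
    transitivity ((cos t ^+ 2 + sin t ^+ 2) * a); first ring.
    by rewrite h mul1r.
  transitivity ((cos t ^+ 2 + sin t ^+ 2) * b); first ring.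
  by rewrite h mul1r.
- move=> p; rewrite /rot nrm_rotI /rotI /=.
  set t := th _; have h := cos2Dsin2 t.
  case: p t h => a b /= t h.
  congr pair.
    transitivity ((cos t ^+ 2 + sin t ^+ 2) * a); first ring.
    by rewrite h mul1r.
  transitivity ((cos t ^+ 2 + sin t ^+ 2) * b); first ring.
  by rewrite h mul1r.
- apply: cont_pair.
    by apply: cont_add; apply: cont_mul => //; (exact: cont_fst || exact: cont_snd).
  by apply: cont_sub; apply: cont_mul => //; (exact: cont_fst || exact: cont_snd).
- apply: cont_pair.
    by apply: cont_sub; apply: cont_mul => //; (exact: cont_fst || exact: cont_snd).
  by apply: cont_add; apply: cont_mul => //; (exact: cont_fst || exact: cont_snd).
Qed.
End S6.

Set Implicit Arguments. Unset Strict Implicit.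

Section S7.
Variable R : realType.
Local Notation P := (R * R)%type.

Lemma angle (p : P) : exists t : R, cos t * nrm p = p.1 /\ sin t * nrm p = p.2.
Proof.
case: p => a b; rewrite /nrm /=.
set r := Num.sqrt _.
have s0 : 0 <= a ^+ 2 + b ^+ 2 by rewrite addr_ge0 // sqr_ge0.
have r2 : r ^+ 2 = a ^+ 2 + b ^+ 2 by rewrite sqr_sqrtr.
have r0 : 0 <= r by rewrite sqrtr_ge0.
have [rz|rp] := eqVneq r 0.
  have : a ^+ 2 + b ^+ 2 = 0 by rewrite -r2 rz expr0n.
  move=> h; have ha : a = 0 by nra.
  have hb : b = 0 by nra.
  by exists 0; rewrite rz ha hb !mulr0.
have rpos : 0 < r by rewrite lt_neqAle eq_sym rp.
have ar : `|a| <= r by rewrite /r -sqrtr_sqr; apply: ler_wsqrtr; rewrite lerDl sqr_ge0.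
pose x := a / r.
have hx : -1 <= x <= 1.
  by rewrite -ler_norml /x normrM normfV (gtr0_norm rpos) ler_pdivrMr // mul1r.
have e1 : 1 - x ^+ 2 = (b / r) ^+ 2.
  rewrite /x; apply: (@mulIf _ (r ^+ 2)); first by rewrite expf_neq0.
  rewrite mulrBl mul1r !expr_div_n !divfK ?expf_neq0 // r2; ring.
have ca : cos (acos x) * r = a by rewrite acosK ?inE // /x divfK.
have sa : sin (acos x) = `|b / r| by rewrite sin_acos // e1 sqrtr_sqr.
have [b0|b0] := leP 0 b.
  exists (acos x); split => //.
  by rewrite sa ger0_norm ?divr_ge0 // divfK.
exists (- acos x); split; first by rewrite cosN.
rewrite sinN sa ltr0_norm; last by rewrite ltr_pdivrMr // mul0r.
by rewrite opprK divfK.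
Qed.

Lemma rot_angle (th : R -> R) (q : P) :
  cos (th (nrm q)) * nrm q = q.1 -> sin (th (nrm q)) * nrm q = q.2 ->
  rot th q = (nrm q, 0).
Proof.
rewrite /rot /=; set t := th _; set r := nrm q => h1 h2.
have h := cos2Dsin2 t.
rewrite -h1 -h2; congr pair.
  transitivity ((cos t ^+ 2 + sin t ^+ 2) * r); first ring.
  by rewrite h mul1r.
ring.
Qed.

Lemma normal_form (A : set P) : discrete_subset A ->
  exists (Pm : P -> P) (r : P -> R), [/\ self_homeomorphism Pm,
    (forall a b, A a -> A b -> r a = r b -> a = b),
    discrete_subset (r @` A) & forall a, A a -> Pm a = (r a, 0)].
Proof.
move=> dA.
have [c hc] := generic_center (discrete_countable dA).
have [ang hang] := choice angle.
have inj : forall a b, A a -> A b -> rho c a = rho c b -> a = b.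
  by move=> a b Aa Ab /rho_inj; apply: hc.
have [th [cth hth]] := @ext_via R _ A (rho c) (fun a => ang (transl c a)) inj (rho_discrete c dA).
exists (rot th \o transl c), (rho c); split.
- by apply: homeo_comp; [exact: transl_homeo | exact: rot_homeo].
- exact: inj.
- move=> x; exact: (rho_discrete c dA x).
move=> a Aa /=.
have e : nrm (transl c a) = rho c a by [].
have [h1 h2] := hang (transl c a).
rewrite (@rot_angle th (transl c a)) ?e ?hth //.
Qed.
End S7.

Unset Implicit Arguments. Set Strict Implicit.

Theorem mainTheorem8 (R : realType) : sDH (R * R)%type.
Proof.
split; first exact: norm_hausdorff.
move=> A B f dA dB [fAB finj fsurj].
have [PA [rA [hPA injA dRA ePA]]] := normal_form dA.
have [PB [rB [hPB injB dRB ePB]]] := normal_form dB.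
have [psi [cpsi hpsi]] := @ext_via R _ A rA (fun a => rB (f a) - rA a) injA dRA.
pose finv b := get [set a | A a /\ f a = b].
have [chi [cchi hchi]] := @ext_via R _ B rB (fun b => - rA (finv b)) injB dRB.
have hPB' := hPB.
case: hPB' => gB [gB1 gB2 cPB cgB].
exists ((((gB \o shearV chi) \o shearH psi) \o shearV id) \o PA); split.
  apply: homeo_comp => //.
  apply: homeo_comp; first by apply: shearV_homeo => x; exact: cvg_id.
  apply: homeo_comp; first exact: shearH_homeo.
  apply: homeo_comp; first exact: shearV_homeo.
  exact: homeo_sym gB1 gB2 cPB cgB.
move=> a Aa /=.
have fa : finv (f a) = a.
  have : [set b | A b /\ f b = f a] (finv (f a)) by apply: getPex; exists a.
  move=> [Ab fb]; apply: finj => //; rewrite inE //.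
rewrite ePA // /shearV /shearH /= add0r hpsi // addrC subrK.
rewrite hchi; last exact: fAB.
rewrite fa subrr -(ePB (f a)); last exact: fAB.
exact: gB1.
Qed.
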